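(* For $E \in \Delta_{\mathbb{F}}^{\mathrm{el}}$, the map $E \to \tau^*(\tau E)$ in $\mathcal{P}(\Delta_{\mathbb{F}}^1)$ is an equivalence.
   Context: $\Delta_{\mathbb{F}}^1$ is the full subcategory of Barwick's category $\Delta_{\mathbb{F}}$ (objects $([n], f\colon[n]\to\mathbb{F})$ with $\mathbb{F}$ finite sets; morphisms $(\phi,\eta)$ with $\eta\colon f\to g\circ\phi$ having injective components and pullback naturality squares) on objects with $f(n)=\mathbf{1}$. $\Delta_{\mathbb{F}}^{\mathrm{el}}$ consists of the objects $([1],\mathbf{k}\to\mathbf{1})$, $k\ge0$, and $([0],\mathbf{1})$. $\tau\colon\Delta_{\mathbb{F}}^1\to\Omega$ (dendroidal category) sends $([n],f)$ to the tree with edges $\coprod_{i=0}^n f(i)$, vertices $\coprod_{i=1}^n f(i)$, the edge $x\in f(i)$ ($i<n$) entering vertex $f^{i(i+1)}(x)$; thus $\tau([0],\mathbf{1})$ is the edge $\eta$ and $\tau([1],\mathbf{k}\to\mathbf{1})$ is the corolla $C_k$. $\mathcal{P}(-)$ denotes presheaves of spaces; objects are viewed as presheaves via Yoneda, and $\tau^*$ is restriction along $\tau$; the map is the unit $E\to\tau^*\tau_!E$. *)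

(* Defs.v *)
From mathcomp Require Import all_boot.
Set Implicit Arguments. Unset Strict Implicit. Unset Printing Implicit Defensive.

(* An object ([n], f : [n] -> F) is encoded (up to isomorphism) as a   *)
(* finite set dT of "elements", each lying over a level in [n] = 'I_n.+1 *)
(* (the level-i fibre is f(i)), together with the successor map        *)
(* dnxt, which on level i < n is f^{i(i+1)} : f(i) -> f(i+1).          *)
(* The value of dnxt on level n is irrelevant (never used).            *)
(* dtop : f(n) is a one-element set (f(n) = 1).                        *)
Record DObj := {
  dn : nat;
  dT : finType;
  dlev : dT -> 'I_dn.+1;
  dnxt : dT -> dT;
  dnxt_lev : forall x, (dlev x < dn)%N -> nat_of_ord (dlev (dnxt x)) = (dlev x).+1;
  dtop : #|[pred x | nat_of_ord (dlev x) == dn]| = 1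
}.

(* f^{ij}(x) for x in f(i), i <= j : iterate the successor map j - i times *)
Definition dmap (X : DObj) (k : nat) (x : dT X) : dT X := iter k (@dnxt X) x.

(* Morphisms (phi, eta) : ([n],f) -> ([m],g) of Delta_F:
   phi : [n] -> [m] order preserving, eta : f => g o phi a natural
   transformation with injective components and cartesian (pullback)
   naturality squares.  eta is given as a single map on elements, whose
   restriction to level i is the component eta_i : f(i) -> g(phi i). *)
Definition is_dmorph (X Y : DObj) (phi : 'I_(dn X).+1 -> 'I_(dn Y).+1)
  (eta : dT X -> dT Y) : Prop :=
  [/\
      (forall i j : 'I_(dn X).+1, (i <= j)%N -> (phi i <= phi j)%N),
      (forall x, dlev (eta x) = phi (dlev x)),
      (forall x y, dlev x = dlev y -> eta x = eta y -> x = y),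
      (forall (x : dT X) (j : 'I_(dn X).+1), (dlev x <= j)%N ->
         eta (dmap (j - dlev x) x) = dmap (phi j - phi (dlev x)) (eta x))
    & (* the naturality squares are pullbacks:
         f(i) -> f(j) x_{g(phi j)} g(phi i) is a bijection *)
      (forall i j : 'I_(dn X).+1, (i <= j)%N ->
         forall (y : dT Y) (z : dT X), dlev y = phi i -> dlev z = j ->
           dmap (phi j - phi i) y = eta z ->
           exists! x : dT X, [/\ dlev x = i, eta x = y & dmap (j - i) x = z])].

Record DHom (X Y : DObj) := {
  dh_phi : 'I_(dn X).+1 -> 'I_(dn Y).+1;
  dh_eta : dT X -> dT Y;
  dh_ok : is_dmorph dh_phi dh_eta
}.

Record tree := {
  tE : finType;
  tV : finType;
  tout : tV -> tE;
  tin : tV -> {set tE}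
}.

(* Operations of the free coloured operad Omega(T): there is exactly one
   operation with (necessarily distinct) inputs S and output e iff
   (S ; e) is obtained from identities and the generating vertices by
   operadic composition; op T S e expresses that such an operation exists. *)
Inductive op (T : tree) : {set tE T} -> tE T -> Prop :=
| op_id (e : tE T) : op [set e] e
| op_comp (v : tV T) (S : tE T -> {set tE T}) :
    (forall a, a \in tin v -> op (S a) a) ->
    op (\bigcup_(a in tin v) S a) (tout v).

(* Morphisms S -> T in Omega = maps of coloured operads Omega(S) -> Omega(T).
   Since Omega(T) has at most one operation per profile, such a map is the
   same as a map on edges sending each generating vertex of S to an
   operation of Omega(T), i.e. injective on the inputs of every vertex v and
   with an operation (f(in v) ; f(out v)) in Omega(T). *)
Definition is_omap (S T : tree) (f : tE S -> tE T) : Prop :=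
  forall v : tV S, {in tin v &, injective f} /\ op (f @: tin v) (f (tout v)).

Record OHom (S T : tree) := {
  oh_fun : tE S -> tE T;
  oh_ok : is_omap oh_fun
}.

(* Edges: all elements (coprod_{i=0}^n f(i)); vertices: elements of    *)
(* level >= 1 (coprod_{i=1}^n f(i)); the vertex v in f(i) has output   *)
(* edge v in f(i) and inputs the edges x in f(i-1) with f^{(i-1)i}(x)=v. *)
Definition tau_vert (X : DObj) := {x : dT X | (0 < dlev x)%N}.

Definition tau (X : DObj) : tree :=
  {| tE := dT X;
     tV := tau_vert X;
     tout := fun v => val v;
     tin := fun v => [set x | ((dlev x < dn X)%N && (dnxt x == val v))] |}.

(* On morphisms, tau (phi, eta) is the edge map eta. *)

(* Elementary objects: ([0], 1) and ([1], k -> 1).                     *)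
Section Elementary.

Lemma eta_obj_lev (x : unit) :
  ((fun _ : unit => (ord0 : 'I_1)) x < 0)%N ->
  nat_of_ord ((fun _ : unit => (ord0 : 'I_1)) tt) = ((fun _ : unit => (ord0 : 'I_1)) x).+1.
Proof. by []. Qed.

Lemma eta_obj_top : #|[pred x : unit | nat_of_ord (ord0 : 'I_1) == 0%N]| = 1.
Proof. by rewrite (eq_card (B := predT)) // card_unit. Qed.

Definition eta_obj : DObj :=
  {| dn := 0; dT := unit; dlev := fun _ => ord0; dnxt := fun _ => tt;
     dnxt_lev := eta_obj_lev; dtop := eta_obj_top |}.

Definition cor_lev (k : nat) (x : option 'I_k) : 'I_2 :=
  if x is Some _ then ord0 else ord_max.

Lemma cor_obj_lev (k : nat) (x : option 'I_k) :
  (cor_lev x < 1)%N -> nat_of_ord (cor_lev (None : option 'I_k)) = (cor_lev x).+1.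
Proof. by case: x. Qed.

Lemma cor_obj_top (k : nat) :
  #|[pred x : option 'I_k | nat_of_ord (cor_lev x) == 1%N]| = 1.
Proof.
rewrite (eq_card (B := pred1 None)) ?card1 // => x.
by case: x.
Qed.

Definition cor_obj (k : nat) : DObj :=
  {| dn := 1; dT := option 'I_k; dlev := @cor_lev k; dnxt := fun _ => None;
     dnxt_lev := @cor_obj_lev k; dtop := cor_obj_top k |}.

End Elementary.

Inductive elementary : DObj -> Prop :=
| el_eta : elementary eta_obj
| el_cor (k : nat) : elementary (cor_obj k).

(* The component at X of the unit E -> tau^* tau_! E = tau^*(tau E) is the
   map Hom(X, E) -> Hom_Omega(tau X, tau E), (phi, eta) |-> eta.
   It is an equivalence of (discrete) spaces iff it is a bijection; we
   state that it is well defined and bijective. *)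
Definition unit_component_bijective (X E : DObj) : Prop :=
  (forall f : DHom X E, is_omap (S := tau X) (T := tau E) (dh_eta f)) /\
  (forall g : OHom (tau X) (tau E),
      exists! f : DHom X E, dh_eta f =1 oh_fun g).

(* Main.v *)
Require Import Defs.
From mathcomp Require Import all_boot.
From mathcomp Require Import zify.
From Stdlib Require Import FunctionalExtensionality ProofIrrelevance.
Set Implicit Arguments. Unset Strict Implicit. Unset Printing Implicit Defensive.

Lemma lev_le (X : DObj) (x : dT X) : (dlev x <= dn X)%N.
Proof. by rewrite -ltnS ltn_ord. Qed.

Lemma top_ex (X : DObj) : exists t : dT X, nat_of_ord (dlev t) = dn X.
Proof.
have := dtop X; move/eqP/card1P => [t Ht]; exists t.
by have := Ht t; rewrite !inE eqxx => /eqP.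
Qed.

Lemma top_uniq (X : DObj) (x y : dT X) :
  nat_of_ord (dlev x) = dn X -> nat_of_ord (dlev y) = dn X -> x = y.
Proof.
have := dtop X; move/eqP/card1P => [t Ht] Hx Hy.
have := Ht x; have := Ht y; rewrite !inE Hx Hy eqxx /=.
by move=> /esym/eqP -> /esym/eqP ->.
Qed.

Lemma down_ind (X : DObj) (P : dT X -> Prop) :
  (forall x, nat_of_ord (dlev x) = dn X -> P x) ->
  (forall x, (dlev x < dn X)%N -> P (dnxt x) -> P x) -> forall x, P x.
Proof.
move=> H0 HS x; move Em: (dn X - dlev x) => m.
elim: m x Em => [|m IH] x Hm.
  apply: H0; have := lev_le x; lia.
have Hlt : (dlev x < dn X)%N by lia.
apply: HS => //; apply: IH; rewrite (dnxt_lev Hlt); lia.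
Qed.

Lemma dmapS (X : DObj) m (x : dT X) : dmap m.+1 x = dnxt (dmap m x).
Proof. by rewrite /dmap iterS. Qed.

Lemma dmap_lev (X : DObj) m (x : dT X) :
  (dlev x + m <= dn X)%N -> nat_of_ord (dlev (dmap m x)) = (dlev x + m)%N.
Proof.
elim: m => [|m IH] H; first by rewrite addn0.
rewrite dmapS dnxt_lev IH //; lia.
Qed.

Lemma nx_pos (X : DObj) (x : dT X) : (dlev x < dn X)%N -> (0 < dlev (dnxt x))%N.
Proof. by move=> H; rewrite (dnxt_lev H). Qed.

Definition vz (X : DObj) (z : dT X) (H : (0 < dlev z)%N) : tau_vert X :=
  exist (fun y => (0 < dlev y)%N) z H.

Lemma in_tin (X : DObj) (v : tau_vert X) (x : dT X) :
  (x \in @tin (tau X) v) = ((dlev x < dn X)%N && (dnxt x == val v)).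
Proof. by rewrite inE. Qed.

Lemma tin_lev (X : DObj) (v : tau_vert X) (x : dT X) :
  x \in @tin (tau X) v -> (dlev x < dn X)%N /\ nat_of_ord (dlev (val v)) = (dlev x).+1.
Proof. rewrite in_tin => /andP[H /eqP <-]; by rewrite (dnxt_lev H). Qed.

Lemma op_eta S e : op (T := tau eta_obj) S e -> S = [set e].
Proof. case=> // -[v Hv]; by []. Qed.

Lemma op_cor k S e : op (T := tau (cor_obj k)) S e ->
  S = [set e] \/ (e = None /\ S = [set x | x != None]).
Proof.
elim=> [e'|v S' _ IH]; first by left.
right; case: v IH => -[a|] Hv IH //=; split => //.
have HS : forall a, a \in @tin (tau (cor_obj k)) (exist _ None Hv) -> S' a = [set a].
  move=> a Ha; case: (IH a Ha) => // -[Ea _]; by move: Ha; rewrite Ea inE.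
apply/setP=> y; rewrite inE; apply/bigcupP/idP.
- by move=> [a Ha]; rewrite HS // inE => /eqP ->; move: Ha; rewrite inE; case: a.
- case: y => // a _; exists (Some a); first by rewrite inE.
  by rewrite HS ?inE.
Qed.

Definition vert_of (X : DObj) (x : dT X) (H : (dlev x < dn X)%N) : tau_vert X :=
  vz (nx_pos H).

Lemma in_vert_of (X : DObj) (x y : dT X) (H : (dlev x < dn X)%N) :
  (dlev y < dn X)%N -> dnxt y = dnxt x -> y \in @tin (tau X) (vert_of H).
Proof. by move=> Hy E; rewrite in_tin Hy E eqxx. Qed.

Lemma cor_step (X : DObj) k (g : dT X -> option 'I_k)
  (Hg : is_omap (S := tau X) (T := tau (cor_obj k)) g) (x : dT X) :
  (dlev x < dn X)%N -> g (dnxt x) = None \/ g (dnxt x) = g x.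
Proof.
move=> H; have [_ Hop] := Hg (vert_of H).
case: (op_cor Hop) => [E|[E _]]; [right| by left].
have : g x \in g @: @tin (tau X) (vert_of H) by apply: imset_f; exact: in_vert_of.
by rewrite E inE => /eqP.
Qed.

Lemma cor_B (X : DObj) k (g : dT X -> option 'I_k)
  (Hg : is_omap (S := tau X) (T := tau (cor_obj k)) g) (x : dT X) :
  (dlev x < dn X)%N -> g x = None -> g (dnxt x) = None.
Proof. by move=> H Gx; case: (cor_step Hg H) => ->. Qed.

Lemma cor_chainB (X : DObj) k (g : dT X -> option 'I_k)
  (Hg : is_omap (S := tau X) (T := tau (cor_obj k)) g) m (x : dT X) :
  (dlev x + m <= dn X)%N -> g x = None -> g (dmap m x) = None.
Proof.
elim: m => [|m IH] H Gx //; rewrite dmapS; apply: (cor_B Hg).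
  rewrite dmap_lev; lia.
apply: IH => //; lia.
Qed.

Lemma cor_chain (X : DObj) k (g : dT X -> option 'I_k)
  (Hg : is_omap (S := tau X) (T := tau (cor_obj k)) g) m (x : dT X) :
  (dlev x + m <= dn X)%N -> g (dmap m x) != None -> g (dmap m x) = g x.
Proof.
elim: m => [|m IH] H Gx //.
have Hl : (dlev (dmap m x) < dn X)%N by rewrite dmap_lev; lia.
move: Gx; rewrite dmapS; case: (cor_step Hg Hl) => -> // Gm.
apply: IH => //; lia.
Qed.

Lemma cor_A (X : DObj) k (g : dT X -> option 'I_k)
  (Hg : is_omap (S := tau X) (T := tau (cor_obj k)) g) (x : dT X) :
  g x = None -> forall y, dlev y = dlev x -> y = x.
Proof.
elim/down_ind: x => [x Hx _ y Hy|x Hlt IH Gx y Hy].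
  by apply: top_uniq => //; rewrite Hy.
have Hly : (dlev y < dn X)%N by rewrite Hy.
have Eny : dnxt y = dnxt x.
  apply: IH; first exact: cor_B.
  by apply: val_inj; rewrite /= !dnxt_lev // Hy.
have Hx : x \in @tin (tau X) (vert_of Hlt) by exact: in_vert_of.
have Hy' : y \in @tin (tau X) (vert_of Hlt) by exact: in_vert_of.
have [Hinj Hop] := Hg (vert_of Hlt).
case: (op_cor Hop) => [E|[_ E]].
- apply: Hinj => //.
  have : g y \in g @: @tin (tau X) (vert_of Hlt) by apply: imset_f.
  have : g x \in g @: @tin (tau X) (vert_of Hlt) by apply: imset_f.
  by rewrite E !inE => /eqP <- /eqP.
- have : g x \in g @: @tin (tau X) (vert_of Hlt) by apply: imset_f.
  by rewrite E inE Gx.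
Qed.

Lemma cor_C (X : DObj) k (g : dT X -> option 'I_k)
  (Hg : is_omap (S := tau X) (T := tau (cor_obj k)) g) (x : dT X) :
  forall y, dlev y = dlev x -> g x = g y -> y = x.
Proof.
elim/down_ind: x => [x Hx y Hy _|x Hlt IH y Hy Gxy].
  by apply: top_uniq => //; rewrite Hy.
have Hly : (dlev y < dn X)%N by rewrite Hy.
have Hlv : dlev (dnxt y) = dlev (dnxt x).
  by apply: val_inj; rewrite /= !dnxt_lev // Hy.
have Eny : dnxt y = dnxt x.
  case: (cor_step Hg Hlt) => Ex; first exact: (cor_A Hg Ex).
  case: (cor_step Hg Hly) => Ey; first by symmetry; apply: (cor_A Hg Ey).
  by apply: IH => //; rewrite Ex Ey.
have Hx : x \in @tin (tau X) (vert_of Hlt) by exact: in_vert_of.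
have Hy' : y \in @tin (tau X) (vert_of Hlt) by exact: in_vert_of.
have [Hinj _] := Hg (vert_of Hlt).
by apply: Hinj.
Qed.

Lemma cor_desc (X : DObj) k (g : dT X -> option 'I_k)
  (Hg : is_omap (S := tau X) (T := tau (cor_obj k)) g) (i : nat) m :
  forall z : dT X, nat_of_ord (dlev z) = (i + m)%N -> g z != None ->
  exists x, [/\ nat_of_ord (dlev x) = i, g x = g z & dmap m x = z].
Proof.
elim: m => [|m IH] z Hz Gz; first by exists z; rewrite Hz addn0.
have Hp : (0 < dlev z)%N by rewrite Hz addnS.
have [_ Hop] := Hg (vz Hp).
case: (op_cor Hop) => [E|[E _]]; last by rewrite E in Gz.
have : g z \in g @: @tin (tau X) (vz Hp) by rewrite E inE.
case/imsetP => x1 Hx1 Gx1.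
have [_ Hl1] := tin_lev Hx1.
have [x [Hx Gx Dx]] := IH x1 ltac:(simpl in Hl1; lia) ltac:(by rewrite -Gx1).
exists x; split => //; first by rewrite Gx Gx1.
by rewrite dmapS Dx; move: Hx1; rewrite in_tin => /andP[_ /eqP].
Qed.

Lemma cor_desc2 (X : DObj) k (g : dT X -> option 'I_k)
  (Hg : is_omap (S := tau X) (T := tau (cor_obj k)) g) (i : nat) (a : 'I_k) m :
  (forall w : dT X, nat_of_ord (dlev w) = i -> g w != None) ->
  forall z : dT X, nat_of_ord (dlev z) = (i + m)%N -> g z = None ->
  exists x, [/\ nat_of_ord (dlev x) = i, g x = Some a & dmap m x = z].
Proof.
move=> Hi; elim: m => [|m IH] z Hz Gz.
  by have := Hi z; rewrite Hz addn0 Gz => /(_ erefl).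
have Hp : (0 < dlev z)%N by rewrite Hz addnS.
have [_ Hop] := Hg (vz Hp).
case: (op_cor Hop) => [E|[_ E]].
- have : None \in g @: @tin (tau X) (vz Hp) by rewrite E Gz inE.
  case/imsetP => x1 Hx1 Gx1.
  have [_ Hl1] := tin_lev Hx1.
  have [x [Hx Gx Dx]] := IH x1 ltac:(simpl in Hl1; lia) (esym Gx1).
  exists x; split => //.
  by rewrite dmapS Dx; move: Hx1; rewrite in_tin => /andP[_ /eqP].
- have : Some a \in g @: @tin (tau X) (vz Hp) by rewrite E inE.
  case/imsetP => x1 Hx1 Gx1.
  have [_ Hl1] := tin_lev Hx1.
  have [x [Hx Gx Dx]] := cor_desc Hg (i := i) (m := m) (z := x1)
     ltac:(simpl in Hl1; lia) ltac:(by rewrite -Gx1).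
  exists x; split => //; first by rewrite Gx Gx1.
  by rewrite dmapS Dx; move: Hx1; rewrite in_tin => /andP[_ /eqP].
Qed.

Definition cphi (X : DObj) k (g : dT X -> option 'I_k) (i : 'I_(dn X).+1) : 'I_2 :=
  if [exists w, (dlev w == i) && (g w == None)] then ord_max else ord0.

Lemma cphi_lev (X : DObj) k (g : dT X -> option 'I_k)
  (Hg : is_omap (S := tau X) (T := tau (cor_obj k)) g) (x : dT X) :
  @dlev (cor_obj k) (g x) = cphi g (dlev x).
Proof.
rewrite /cphi; case: existsP => [[w /andP[/eqP Hw /eqP Gw]]|Hn].
  by have -> := cor_A Hg Gw (esym Hw); rewrite Gw.
case Gx: (g x) => [a|] //; exfalso; apply: Hn; exists x; by rewrite eqxx Gx.
Qed.

Lemma cor_lev_None k (y : option 'I_k) : nat_of_ord (cor_lev y) = (y == None).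
Proof. by case: y. Qed.

Lemma cor_dmap k m (y : option 'I_k) : dmap (X := cor_obj k) m y = if m is 0 then y else None.
Proof. by case: m => // m; rewrite /dmap iterS. Qed.

Lemma cor_is_dmorph (X : DObj) k (g : dT X -> option 'I_k)
  (Hg : is_omap (S := tau X) (T := tau (cor_obj k)) g) :
  is_dmorph (X := X) (Y := cor_obj k) (cphi g) g.
Proof.
have Hlv : forall x, @dlev (cor_obj k) (g x) = cphi g (dlev x) by exact: cphi_lev.
split.
- move=> i j Hij; rewrite {1}/cphi.
  case: existsP => [[w /andP[/eqP Hw /eqP Gw]]|_]; last by [].
  have Hl : (dlev w + (j - i) <= dn X)%N by rewrite Hw; have := ltn_ord j; lia.
  have Ej : dlev (dmap (j - i) w) = j by apply: val_inj; rewrite /= dmap_lev // Hw; lia.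
  by rewrite -Ej -Hlv (cor_chainB Hg Hl Gw).
- exact: Hlv.
- move=> x y Hxy Gxy; symmetry; exact: (cor_C Hg (esym Hxy) Gxy).
- move=> x j Hj.
  have Hl : (dlev x + (j - dlev x) <= dn X)%N by have := ltn_ord j; lia.
  have Ej : dlev (dmap (j - dlev x) x) = j by apply: val_inj; rewrite /= dmap_lev //; lia.
  have -> : cphi g j = @dlev (cor_obj k) (g (dmap (j - dlev x) x)) by rewrite Hlv Ej.
  rewrite -Hlv cor_dmap !cor_lev_None.
  case Gx: (g x) => [a|]; last by rewrite (cor_chainB Hg Hl Gx).
  case Gm: (g (dmap (j - dlev x) x)) => [b|] //=.
  by rewrite -Gm (cor_chain Hg Hl) ?Gm.
- move=> i j Hij y z Hy Hz Hd.
  have Hl : (i + (j - i) <= dn X)%N by have := ltn_ord j; lia.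
  suff [x [Hx Gx Dx]] : exists x, [/\ dlev x = i, g x = y & dmap (j - i) x = z].
    exists x; split => // x' [Hx' Gx' _].
    by apply: (cor_C Hg); rewrite ?Hx ?Hx' // Gx Gx'.
  case: y Hy Hd => [a|] Hy Hd.
  + have Hi0 : nat_of_ord (cphi g i) = 0%N by rewrite -Hy.
    have Hnr : forall w : dT X, nat_of_ord (dlev w) = i -> g w != None.
      move=> w Hw; have := Hlv w; have -> : dlev w = i by apply: val_inj.
      move=> /(f_equal (@nat_of_ord _)); rewrite Hi0 cor_lev_None.
      by case: (g w).
    case Gz: (g z) => [b|].
    * have Hj0 : nat_of_ord (cphi g j) = 0%N by rewrite -Hz -Hlv Gz.
      move: Hd; rewrite Hj0 Hi0 cor_dmap /= => Hd.
      have [x [Hx Gx Dx]] := cor_desc Hg (i := i) (m := j - i) (z := z)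
          ltac:(rewrite Hz; lia) ltac:(by rewrite Gz).
      by exists x; split => //; [apply: val_inj | rewrite Gx Hd].
    * have [x [Hx Gx Dx]] := cor_desc2 Hg a Hnr (m := j - i) (z := z)
          ltac:(rewrite Hz; lia) Gz.
      by exists x; split => //; apply: val_inj.
  + have : nat_of_ord (cphi g i) = 1%N by rewrite -Hy.
    rewrite /cphi; case: existsP => [[w /andP[/eqP Hw /eqP Gw]] _|//].
    have Hl' : (dlev w + (j - i) <= dn X)%N by rewrite Hw.
    have Gm := cor_chainB Hg Hl' Gw.
    exists w; split => //.
    symmetry; apply: (cor_A Hg Gm); apply: val_inj; rewrite Hz /= dmap_lev // Hw; lia.
Qed.

Lemma eta_inj (X : DObj) (g : dT X -> unit)
  (Hg : is_omap (S := tau X) (T := tau eta_obj) g) (x : dT X) :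
  forall y, dlev y = dlev x -> y = x.
Proof.
elim/down_ind: x => [x Hx y Hy|x Hlt IH y Hy].
  by apply: top_uniq => //; rewrite Hy.
have Hly : (dlev y < dn X)%N by rewrite Hy.
have Eny : dnxt y = dnxt x.
  by apply: IH; apply: val_inj; rewrite /= !dnxt_lev // Hy.
have Hx : x \in @tin (tau X) (vert_of Hlt) by exact: in_vert_of.
have Hy' : y \in @tin (tau X) (vert_of Hlt) by exact: in_vert_of.
have [Hinj _] := Hg (vert_of Hlt).
by apply: Hinj => //; case: (g x); case: (g y).
Qed.

Lemma eta_desc (X : DObj) (g : dT X -> unit)
  (Hg : is_omap (S := tau X) (T := tau eta_obj) g) (i : nat) m :
  forall z : dT X, nat_of_ord (dlev z) = (i + m)%N ->
  exists x, nat_of_ord (dlev x) = i /\ dmap m x = z.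
Proof.
elim: m => [|m IH] z Hz; first by exists z; rewrite Hz addn0.
have Hp : (0 < dlev z)%N by rewrite Hz addnS.
have [_ Hop] := Hg (vz Hp).
have E := op_eta Hop.
have : g z \in g @: @tin (tau X) (vz Hp) by rewrite E inE.
case/imsetP => x1 Hx1 _.
have [_ Hl1] := tin_lev Hx1.
have [x [Hx Dx]] := IH x1 ltac:(simpl in Hl1; lia).
exists x; split => //.
by rewrite dmapS Dx; move: Hx1; rewrite in_tin => /andP[_ /eqP].
Qed.

Lemma eta_is_dmorph (X : DObj) (g : dT X -> unit)
  (Hg : is_omap (S := tau X) (T := tau eta_obj) g) :
  is_dmorph (X := X) (Y := eta_obj) (fun _ => ord0) g.
Proof.
split => //.
- move=> x y Hxy _; symmetry; exact: (eta_inj Hg (esym Hxy)).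
- by move=> x j _; case: (g _); case: (dmap _ _).
- move=> i j Hij y z _ Hz _.
  have [x [Hx Dx]] := eta_desc Hg (i := i) (m := j - i) (z := z)
      ltac:(rewrite Hz; lia).
  exists x; split.
    by split => //; [apply: val_inj | case: (g x); case: y].
  move=> x' [Hx' _ _]; apply: (eta_inj Hg); by apply: val_inj; rewrite /= Hx Hx'.
Qed.

Definition prev_ord (X : DObj) (w : dT X) : 'I_(dn X).+1 :=
  Ordinal (leq_ltn_trans (leq_pred _) (ltn_ord (dlev w))).

Lemma part1 (X E : DObj) (HE : elementary E) (f : DHom X E) :
  is_omap (S := tau X) (T := tau E) (dh_eta f).
Proof.
case: f => phi eta [Hmono Hlev Hinj Hnat Hpb] /= v.
set w := val v.
have Hw : (0 < dlev w)%N := valP v.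
set i := prev_ord w; set j := dlev w.
have Hij : (i <= j)%N by rewrite /= leq_pred.
have Hti : forall x, x \in @tin (tau X) v -> dlev x = i.
  move=> x /tin_lev [_ H]; apply: val_inj => /=; rewrite -/w H; by [].
have Htn : forall x, x \in @tin (tau X) v -> dnxt x = w.
  by move=> x; rewrite in_tin => /andP[_ /eqP].
have Hd1 : (j - i = 1)%N by rewrite /j /i /=; move: Hw; clear; lia.
have Hin : forall x, dlev x = i -> dmap 1 x = w -> x \in @tin (tau X) v.
  move=> x Hx Dx; rewrite in_tin; apply/andP; split; last by apply/eqP; exact: Dx.
  rewrite Hx /=.
  have := lev_le w; move: Hw; clear; lia.
have Hnt : forall x, x \in @tin (tau X) v -> eta w = dmap (phi j - phi i) (eta x).
  move=> x Hx; have := Hnat x j; rewrite (Hti x Hx) Hd1 => <-; last by [].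
  by rewrite /dmap /= (Htn x Hx).
split.
  move=> x y Hx Hy; apply: Hinj; by rewrite (Hti x Hx) (Hti y Hy).
case: HE phi eta Hmono Hlev Hinj Hnat Hpb Hnt => [|k] phi eta Hmono Hlev _ _ Hpb Hnt.
- have [x0 [[Hx0 _ Dx0] _]] : exists! x, [/\ dlev x = i, eta x = eta w & dmap (j - i) x = w].
    apply: Hpb => //; first by rewrite !(ord1 (phi _)).
    by rewrite !(ord1 (phi _)).
  rewrite Hd1 in Dx0.
  suff -> : eta @: @tin (tau X) v = [set eta w] by apply: op_id.
  apply/setP => u; rewrite inE; case: u; case: (eta w).
  by rewrite eqxx; apply/imsetP; exists x0 => //; [exact: Hin | case: (eta x0)].
- have Hle : (phi i <= phi j)%N := Hmono _ _ Hij.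
  case Ed: (phi j - phi i)%N => [|d].
  + have Hpp : phi i = phi j by apply: val_inj; apply/eqP; rewrite eqn_leq Hle /= -subn_eq0 Ed.
    have [x0 [[Hx0 Gx0 Dx0] _]] : exists! x, [/\ dlev x = i, eta x = eta w & dmap (j - i) x = w].
      by apply: Hpb => //; [rewrite Hlev Hpp | rewrite Ed].
    rewrite Hd1 in Dx0.
    suff -> : eta @: @tin (tau X) v = [set eta w] by apply: op_id.
    apply/setP => u; rewrite inE; apply/imsetP/eqP.
    * by move=> [x Hx ->]; rewrite (Hnt x Hx) Ed.
    * by move=> ->; exists x0 => //; exact: Hin.
  + have Hlt2 : (phi j < 2)%N by exact: (ltn_ord (phi j)).
    have Hi0 : nat_of_ord (phi i) = 0%N by lia.
    have Hj1 : nat_of_ord (phi j) = 1%N by lia.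
    have Ew : eta w = None.
      by have := Hlev w; rewrite -/j => /(f_equal (@nat_of_ord _)); rewrite Hj1 cor_lev_None; case: (eta w).
    have Hop := op_comp (T := tau (cor_obj k)) (v := @vz (cor_obj k) None isT)
       (S := fun a => [set a]) (fun a _ => op_id a).
    rewrite Ew; move: Hop; congr op.
    apply/setP => u; apply/bigcupP/imsetP.
    * move=> [a Ha]; rewrite inE => /eqP ->.
      have Ha' : nat_of_ord (@dlev (cor_obj k) a) = phi i.
        by rewrite Hi0; move: Ha; rewrite inE; case: a.
      have [x0 [[Hx0 Gx0 Dx0] _]] : exists! x, [/\ dlev x = i, eta x = a & dmap (j - i) x = w].
        apply: Hpb => //; first exact: val_inj.
        by rewrite Ed cor_dmap Ew.
      rewrite Hd1 in Dx0.
      by exists x0 => //; exact: Hin.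
    * move=> [x Hx ->]; exists (eta x); last by rewrite inE.
      have := Hlev x; rewrite (Hti x Hx) => /(f_equal (@nat_of_ord _)).
      by rewrite Hi0 inE; case: (eta x).
Qed.

Lemma dhom_ext (X E : DObj) (f1 f2 : DHom X E) :
  dh_phi f1 =1 dh_phi f2 -> dh_eta f1 =1 dh_eta f2 -> f1 = f2.
Proof.
case: f1 f2 => p1 e1 o1 [p2 e2 o2] /= Hp He.
have Ep := functional_extensionality _ _ Hp.
have Ee := functional_extensionality _ _ He.
subst p2 e2; f_equal; apply: proof_irrelevance.
Qed.

Lemma cor_phi_empty (X : DObj) k (f : DHom X (cor_obj k)) (i : 'I_(dn X).+1) :
  (forall x : dT X, dlev x != i) -> dh_phi f i = ord0.
Proof.
case: f => phi eta [Hmono Hlev Hinj Hnat Hpb] /= Hem.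
have [t Ht] := top_ex X.
have Hit : (i <= dlev t)%N by rewrite Ht -ltnS ltn_ord.
have Hle := Hmono _ _ Hit.
have Hlt2 : (phi (dlev t) < 2)%N by exact: (ltn_ord (phi (dlev t))).
apply: val_inj => /=; case Hpi: (nat_of_ord (phi i)) => [|p] //; exfalso.
have Hpp : phi i = phi (dlev t) by apply: ord_inj; move: Hle Hlt2 Hpi; clear; lia.
have [x [[Hx _ _] _]] : exists! x, [/\ dlev x = i, eta x = eta t & dmap (dlev t - i) x = t].
  apply: Hpb => //; first by rewrite Hlev Hpp.
  by rewrite Hpp subnn.
by have := Hem x; rewrite Hx eqxx.
Qed.

Lemma phi_det (X E : DObj) (HE : elementary E) (f1 f2 : DHom X E) :
  dh_eta f1 =1 dh_eta f2 -> dh_phi f1 =1 dh_phi f2.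
Proof.
move=> He i; case: HE f1 f2 He => [|k] f1 f2 He.
  by rewrite (ord1 (dh_phi f1 i)) (ord1 (dh_phi f2 i)).
case: (boolP [exists x : dT X, dlev x == i]) => [/existsP [x /eqP Hx]|Hn].
  have [_ H1 _ _ _] := dh_ok f1; have [_ H2 _ _ _] := dh_ok f2.
  by rewrite -Hx -H1 -H2 He.
have Hem : forall x : dT X, dlev x != i.
  by move=> x; apply/negP => Hx; apply: (negP Hn); apply/existsP; exists x.
by rewrite !cor_phi_empty.
Qed.

Theorem lemma4p6 :
  forall E : DObj, elementary E ->
  forall X : DObj, unit_component_bijective X E.
Proof.
move=> E HE X; split; first by move=> f; exact: part1.
move=> g; case: HE g => [|k] g.
- exists (Build_DHom (eta_is_dmorph (oh_ok g))); split => // f' Hf'.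
  apply: dhom_ext => //=; first by move=> i; rewrite (ord1 (dh_phi f' i)).
- exists (Build_DHom (cor_is_dmorph (oh_ok g))); split => // f' Hf'.
  have He : dh_eta (Build_DHom (cor_is_dmorph (oh_ok g))) =1 dh_eta f' by move=> x; rewrite Hf'.
  apply: dhom_ext => //; exact: (phi_det (el_cor k) He).
Qed.
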